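(* Let $d\ge 3$ be odd. The group $G_d$ is neither torsion nor torsion-free: it contains elements of infinite order and nontrivial elements of finite order (namely the element $\xi_i=[a_{\overline{i+1}}^2,a_{\overline{i+2}}]\,([a_i,a_{\overline{i+1}}][a_{\overline{i+1}},a_{\overline{i+2}}])^{-1}$, which acts as $(i\ \overline{i+2})(\overline{i+1}\ \overline{i+3})$ on the first level with all first-level sections trivial, has order $3$ if $d=3$ and order $2$ if $d\ge5$).
   Context: Let $d\ge 3$, $X=\{1,\dots,d\}$, $T$ the $d$-regular rooted tree with vertex set $X^*$. $\mathrm{Aut}(T)$ is the group of root-preserving automorphisms with product left-to-right: $(gh)(u)=h(g(u))$. Sections $g|_u$ are defined by $g(uv)=g(u)\,g|_u(v)$; we write $g=(g|_1,\dots,g|_d)\lambda_g$ with $\lambda_g\in S_d$ the action on the first level; $e$ is the identity; $\overline{j}\in\{1,\dots,d\}$ denotes $j$ mod $d$. $G_d=\langle a_1,\dots,a_d\rangle\le\mathrm{Aut}(T)$ where $a_i$ acts on the first level as $(i\ \overline{i+1})$, with $a_i|_i=a_i$, $a_i|_{\overline{i+1}}=a_{\overline{i+1}}$, and $a_i|_x=e$ otherwise. Commutators: $[g,h]=g^{-1}h^{-1}gh$. *)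

(* Defs.v *)
From mathcomp Require Import all_boot all_fingroup.
Set Implicit Arguments. Unset Strict Implicit. Unset Printing Implicit Defensive.

(* Conventions: the alphabet X = {1,...,d} is represented by 'I_d = {0,...,d-1}
   (letter k+1 of the paper is the ordinal k).  The tree T has vertex set
   seq 'I_d (finite words).  Elements of Aut(T) are represented by functions
   seq 'I_d -> seq 'I_d; equality of automorphisms is extensional equality. *)

Lemma ord_pos d (i : 'I_d) : 0 < d.
Proof. by case: i => m Hm; apply: leq_ltn_trans Hm. Qed.

Definition osh d (i : 'I_d) (k : nat) : 'I_d :=
  Ordinal (ltn_pmod (i + k) (ord_pos i)).

Fixpoint gen_act d (i : 'I_d) (w : seq 'I_d) : seq 'I_d :=
  match w with
  | [::] => [::]
  | x :: w' =>
      if x == i then osh i 1 :: gen_act i w'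
      else if x == osh i 1 then i :: gen_act (osh i 1) w'
      else x :: w'
  end.

Fixpoint gen_inv d (i : 'I_d) (w : seq 'I_d) : seq 'I_d :=
  match w with
  | [::] => [::]
  | x :: w' =>
      if x == osh i 1 then i :: gen_inv i w'
      else if x == i then osh i 1 :: gen_inv (osh i 1) w'
      else x :: w'
  end.

(* Group words over the generators a_i; they denote the elements of G_d. *)
Inductive gword (d : nat) : Type :=
| GOne : gword d
| GGen : 'I_d -> gword d
| GInv : gword d -> gword d
| GMul : gword d -> gword d -> gword d.

(* eval false w = the automorphism denoted by w, eval true w = its inverse.
   Products are composed left to right: (gh)(u) = h(g(u)). *)
Fixpoint eval d (b : bool) (w : gword d) : seq 'I_d -> seq 'I_d :=
  match w with
  | GOne => id
  | GGen i => if b then gen_inv i else gen_act i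
  | GInv w' => eval (~~ b) w'
  | GMul w1 w2 => if b then eval b w1 \o eval b w2
                  else eval b w2 \o eval b w1
  end.

Definition geval d (w : gword d) := eval false w.

Definition gcomm d (g h : gword d) : gword d :=
  GMul (GMul (GMul (GInv g) (GInv h)) g) h.

Definition gsq d (g : gword d) := GMul g g.

Definition xi d (i : 'I_d) : gword d :=
  GMul (gcomm (gsq (GGen (osh i 1))) (GGen (osh i 2)))
       (GInv (GMul (gcomm (GGen i) (GGen (osh i 1)))
                   (gcomm (GGen (osh i 1)) (GGen (osh i 2))))).

Definition is_id d (f : seq 'I_d -> seq 'I_d) := forall u, f u = u.

Definition fpow d (f : seq 'I_d -> seq 'I_d) (n : nat) := iter n f.

Definition has_order d (f : seq 'I_d -> seq 'I_d) (k : nat) :=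
  0 < k /\ is_id (fpow f k) /\ (forall m, 0 < m < k -> ~ is_id (fpow f m)).

Definition Gd_torsion d :=
  forall g : gword d, exists2 n, 0 < n & is_id (fpow (geval g) n).

Definition Gd_torsion_free d :=
  forall g : gword d, ~ is_id (geval g) ->
    forall n, 0 < n -> ~ is_id (fpow (geval g) n).

(* Main.v *)
Require Import Defs.
From mathcomp Require Import all_boot all_fingroup zify.

Arguments osh : simpl never.
Arguments gen_act : simpl never.
Arguments gen_inv : simpl never.

Lemma gen_act_cons d (j x : 'I_d) w : gen_act j (x :: w) =
  if x == j then osh j 1 :: gen_act j w
  else if x == osh j 1 then j :: gen_act (osh j 1) w else x :: w.
Proof. by []. Qed.

Lemma gen_inv_cons d (j x : 'I_d) w : gen_inv j (x :: w) =
  if x == osh j 1 then j :: gen_inv j w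
  else if x == j then osh j 1 :: gen_inv (osh j 1) w else x :: w.
Proof. by []. Qed.

Lemma gen_act_nil d (j : 'I_d) : gen_act j [::] = [::].
Proof. by []. Qed.
Lemma gen_inv_nil d (j : 'I_d) : gen_inv j [::] = [::].
Proof. by []. Qed.

Lemma osh_val d (i : 'I_d) k : val (osh i k) = (i + k) %% d.
Proof. by []. Qed.

Lemma osh1_neq d (j : 'I_d) : 2 <= d -> (j == osh j 1) = false.
Proof.
move=> hd; apply/negbTE; rewrite -val_eqE osh_val.
case: j => j /= hj; case: (ltngtP j.+1 d) => h.
- rewrite addn1 modn_small //; lia.
- lia.
- rewrite addn1 h modnn; lia.
Qed.

Lemma gen_actK d (j : 'I_d) u : gen_inv j (gen_act j u) = u.
Proof.
elim: u j => [|x u IH] j //.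
rewrite gen_act_cons; case: (x =P j) => [->|hx].
- by rewrite gen_inv_cons eqxx IH.
- case: (x =P osh j 1) => [hx1|hx2].
  + subst x; rewrite gen_inv_cons; case: (j =P osh j 1) => [h|_].
      by exfalso; apply: hx; rewrite -h.
    by rewrite eqxx IH.
  + rewrite gen_inv_cons; case: (x =P osh j 1) => // _; case: (x =P j) => //.
Qed.

Lemma gen_invK d (j : 'I_d) u : gen_act j (gen_inv j u) = u.
Proof.
elim: u j => [|x u IH] j //.
rewrite gen_inv_cons; case: (x =P osh j 1) => [->|hx].
- by rewrite gen_act_cons eqxx IH.
- case: (x =P j) => [hx1|hx2].
  + subst x; rewrite gen_act_cons; case: (osh j 1 =P j) => [h|_].
      by exfalso; apply: hx; rewrite h.
    by rewrite eqxx IH.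
  + rewrite gen_act_cons; case: (x =P j) => // _; case: (x =P osh j 1) => //.
Qed.

Lemma eval_nil d b (g : gword d) : eval b g [::] = [::].
Proof. by elim: g b => [|j|g IH|g1 IH1 g2 IH2] b //=; case: b => //=; rewrite ?IH1 ?IH2. Qed.


Arguments osh : simpl never.
Arguments gen_act : simpl never.
Arguments gen_inv : simpl never.

Definition om (n k : nat) : 'I_n.+3 := osh ord0 k.
Definition A (n j : nat) := gen_act (om n j).

Lemma om_val n k : val (om n k) = k %% n.+3.
Proof. by rewrite /om osh_val add0n. Qed.

Lemma om_small n k : k < n.+3 -> val (om n k) = k.
Proof. by move=> h; rewrite om_val modn_small. Qed.

Lemma om_mod n k : om n (k %% n.+3) = om n k.
Proof. by apply: val_inj; rewrite !om_val modn_mod. Qed.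

Lemma om_x n (x : 'I_n.+3) : om n (val x) = x.
Proof. by apply: val_inj; rewrite om_small //; apply: ltn_ord. Qed.

Lemma osh_om n j : osh (om n j) 1 = om n j.+1.
Proof. by apply: val_inj; rewrite osh_val !om_val modnDml addn1. Qed.

Lemma A_hit n j (x : 'I_n.+3) w : val x = j -> A n j (x::w) = om n j.+1 :: A n j w.
Proof.
move=> hx; rewrite /A gen_act_cons osh_om.
have -> : x == om n j by rewrite -val_eqE om_val -hx (modn_small (ltn_ord x)).
by [].
Qed.

Lemma A_hit2 n j (x : 'I_n.+3) w : j < n.+3 -> val x = j.+1 %% n.+3 ->
  A n j (x::w) = om n j :: A n j.+1 w.
Proof.
move=> hj hx; rewrite /A gen_act_cons osh_om.
have -> : (x == om n j) = false.
  apply/negbTE; rewrite -val_eqE om_small // hx.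
  case: (ltngtP j.+1 n.+3) => h; first by rewrite modn_small //; lia.
  - lia.
  - by rewrite h modnn; lia.
have -> : x == om n j.+1 by rewrite -val_eqE om_val hx.
by [].
Qed.

Lemma A_miss n j (x : 'I_n.+3) w : val x <> j %% n.+3 -> val x <> j.+1 %% n.+3 ->
  A n j (x::w) = x :: w.
Proof.
move=> h1 h2; rewrite /A gen_act_cons osh_om.
have -> : (x == om n j) = false by apply/negbTE; rewrite -val_eqE om_val; apply/eqP.
have -> : (x == om n j.+1) = false by apply/negbTE; rewrite -val_eqE om_val; apply/eqP.
by [].
Qed.

Fixpoint P (n k : nat) : seq 'I_n.+3 -> seq 'I_n.+3 :=
  if k is k'.+1 then A n k' \o P n k' else id.
Fixpoint Q (n k : nat) : seq 'I_n.+3 -> seq 'I_n.+3 :=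
  if k is k'.+1 then A n (n.+2 - k') \o Q n k' else id.

Lemma P_S n k u : P n k.+1 u = A n k (P n k u). Proof. by []. Qed.
Lemma Q_S n k u : Q n k.+1 u = A n (n.+2 - k) (Q n k u). Proof. by []. Qed.

Lemma P_0 n k (x : 'I_n.+3) w : 1 <= k <= n.+2 -> val x = 0 ->
  P n k (x :: w) = om n k :: P n k w.
Proof.
move=> hk hx; elim: k hk => [|k IH] hk //.
case: k IH hk => [|k] IH hk; first by rewrite /= A_hit.
rewrite P_S IH; last by lia.
by rewrite A_hit // om_small; lia.
Qed.

Lemma P_gt n k (x : 'I_n.+3) w : k <= n.+2 -> k < val x ->
  P n k (x :: w) = x :: w.
Proof.
move=> hk hx; elim: k hk hx => [|k IH] hk hx //.
rewrite P_S IH; try lia.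
rewrite A_miss //; rewrite ?modn_small; lia.
Qed.

Lemma P_le n k (x : 'I_n.+3) w : k <= n.+2 -> 1 <= val x <= k ->
  P n k (x :: w) = om n (val x).-1 :: A n (val x) w.
Proof.
move=> hk hx; elim: k hk hx => [|k IH] hk hx; first by lia.
have [e|ne] := eqVneq (val x) k.+1.
- rewrite P_S P_gt; try lia.
  rewrite A_hit2 ?e ?modn_small //; lia.
- rewrite P_S IH; try lia.
  rewrite A_miss // om_val ?modn_small; lia.
Qed.

Lemma om_d n : om n n.+3 = om n 0.
Proof. by rewrite -om_mod modnn. Qed.

Lemma A_d n : A n n.+3 = A n 0.
Proof. by rewrite /A -om_mod modnn. Qed.

Lemma Q_lo n k (x : 'I_n.+3) w : k <= n.+2 -> 1 <= val x < n.+3 - k ->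
  Q n k (x :: w) = x :: w.
Proof.
move=> hk hx; elim: k hk hx => [|k IH] hk hx //.
rewrite Q_S IH; try lia.
rewrite A_miss //; first by rewrite modn_small; lia.
case: k {IH} hk hx => [|k] hk hx; first by rewrite subn0 modnn; lia.
rewrite modn_small; lia.

Qed.

Lemma Q_hi n k (x : 'I_n.+3) w : k <= n.+2 -> 1 <= val x -> n.+3 - k <= val x ->
  Q n k (x :: w) = om n (val x).+1 :: A n (val x) w.
Proof.
have hxd : val x < n.+3 := ltn_ord x.
move=> hk h1 hx; elim: k hk hx => [|k IH] hk hx; first by lia.
have [e|ne] := eqVneq (val x) (n.+2 - k).
- rewrite Q_S Q_lo; try lia.
  by rewrite A_hit // e.
- rewrite Q_S IH; try lia.
  rewrite A_miss // om_val.
  + have [e2|ne2] := eqVneq (val x) n.+2.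
    * rewrite e2 modnn modn_small; lia.
    * rewrite !modn_small; lia.
  + have [e2|ne2] := eqVneq (val x) n.+2.
    * rewrite e2 modnn modn_small; lia.
    * rewrite !modn_small; lia.
Qed.

Lemma Q_0 n k (x : 'I_n.+3) w : k <= n.+1 -> val x = 0 ->
  Q n k.+1 (x :: w) = om n (n.+2 - k) :: Q n k (A n 0 w).
Proof.
move=> hk hx; elim: k hk => [|k IH] hk.
- rewrite Q_S /= subn0 A_hit2 // ?hx ?modnn // A_d //.
- rewrite Q_S IH; last by lia.
  rewrite A_hit2; last by rewrite om_small; [rewrite modn_small; lia| lia].
  2: lia.
  have -> : (n.+2 - k.+1).+1 = n.+2 - k by lia.
  by rewrite Q_S.
Qed.

Definition B n := P n n.+3.
Definition C n := Q n n.+2 \o A n 0.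
Definition S n := Q n n.+1 \o A n 0 \o A n 1.

Lemma C_E n u : C n u = Q n n.+2 (A n 0 u). Proof. by []. Qed.

Lemma B_1 n w : B n (om n 1 :: w) = om n n.+2 :: A n 0 (A n 1 w).
Proof.
rewrite /B P_S P_le ?om_small //; try lia.
rewrite A_hit2 ?om_small ?modnn //= A_d //.
Qed.

Lemma B_mid n (x : 'I_n.+3) w : 2 <= val x -> B n (x :: w) = om n (val x).-1 :: A n (val x) w.
Proof.
have hxd : val x < n.+3 := ltn_ord x.
move=> h2; rewrite /B P_S P_le; try lia.
rewrite A_miss // om_val; rewrite ?modnn ?modn_small //; lia.
Qed.

Lemma iter_B n r w : r <= n.+1 ->
  iter r.+1 (B n) (om n 1 :: w) = om n (n.+2 - r) :: Q n r (A n 0 (A n 1 w)).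
Proof.
elim: r => [|r IH] hr; first by rewrite /= B_1 subn0.
rewrite iterS IH; last by lia.
rewrite B_mid om_small; try lia.
have -> : (n.+2 - r).-1 = n.+2 - r.+1 by lia.
by rewrite Q_S.
Qed.

Lemma C_0 n w : C n (om n 0 :: w) = om n 2 :: P n 2 w.
Proof.
rewrite C_E A_hit ?om_small //.
rewrite Q_hi ?om_small //; lia.
Qed.

Lemma C_mid n (x : 'I_n.+3) w : 2 <= val x -> C n (x :: w) = om n (val x).+1 :: A n (val x) w.
Proof.
have hxd : val x < n.+3 := ltn_ord x.
move=> h2; rewrite C_E A_miss; rewrite ?modn_small; try lia.
rewrite Q_hi //; lia.
Qed.

Lemma iter_C n r w : r <= n.+1 ->
  iter r.+1 (C n) (om n 0 :: w) = om n r.+2 :: P n r.+2 w.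
Proof.
elim: r => [|r IH] hr; first by rewrite /= C_0.
rewrite iterS IH; last by lia.
by rewrite C_mid om_small; try lia.
Qed.

Lemma C_conj n u : C n (A n 1 u) = A n 1 (S n u).
Proof. by rewrite C_E Q_S subSnn. Qed.

Lemma iter_period n (F T : seq 'I_n.+3 -> seq 'I_n.+3) v :
  (forall w, iter n.+2 F (v :: w) = v :: T w) ->
  forall q w, iter (q * n.+2) F (v :: w) = v :: iter q T w.
Proof.
move=> hF; elim=> [|q IH] w //.
by rewrite mulSn iterD IH hF.
Qed.

Lemma iter_conj (T : Type) (F G H : T -> T) :
  (forall u, F (G u) = G (H u)) -> forall k u, iter k F (G u) = G (iter k H u).
Proof. by move=> hF; elim=> [|k IH] u //=; rewrite IH hF. Qed.

Lemma B_period n w : iter n.+2 (B n) (om n 1 :: w) = om n 1 :: S n w.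
Proof. by rewrite iter_B // subSnn. Qed.

Lemma C_period n w : iter n.+2 (C n) (om n 0 :: w) = om n 0 :: B n w.
Proof. by rewrite iter_C // om_d. Qed.

Lemma no_torsion n m : 0 < m -> ~ is_id (iter m (B n)) /\ ~ is_id (iter m (C n)).
Proof.
elim/ltn_ind: m => m IH hm.
have [q [r [hm' hr]]] : exists q r, m = r + q * n.+2 /\ r < n.+2.
  exists (m %/ n.+2), (m %% n.+2); split; first by rewrite addnC -divn_eq.
  by rewrite ltn_mod.
split => hid.
- have E w : iter m (B n) (om n 1 :: w) = iter r (B n) (om n 1 :: iter q (S n) w).
    by rewrite hm' iterD (@iter_period n _ _ _ (B_period n)).
  case: r hm' hr E => [|r] hm' hr E.
  + have hq : 0 < q < m by nia.
    have hS : is_id (iter q (S n)).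
      by move=> w; have := E w; rewrite hid /= => -[].
    apply: (proj2 (IH q _ _)); try lia.
    move=> u.
    have -> : iter q (C n) u = iter q (C n) (A n 1 (gen_inv (om n 1) u)) by rewrite /A gen_invK.
    by rewrite (@iter_conj _ _ _ _ (C_conj n)) hS /A gen_invK.
  + have := E [::]; rewrite hid iter_B; last by lia.
    case=> h _; move: h; rewrite !add0n !modn_small; lia.
- have E w : iter m (C n) (om n 0 :: w) = iter r (C n) (om n 0 :: iter q (B n) w).
    by rewrite hm' iterD (@iter_period n _ _ _ (C_period n)).
  case: r hm' hr E => [|r] hm' hr E.
  + have hq : 0 < q < m by nia.
    apply: (proj1 (IH q _ _)); try lia.
    by move=> w; have := E w; rewrite hid /= => -[].
  + have := E [::]; rewrite hid iter_C; last by lia.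
    case=> h _; move: h; rewrite !add0n !modn_small; lia.
Qed.


Arguments osh : simpl never.
Arguments gen_act : simpl never.
Arguments gen_inv : simpl never.

Lemma osh_eq n (i : 'I_n.+3) a b : a < n.+3 -> b < n.+3 -> (osh i a == osh i b) = (a == b).
Proof. by move=> ha hb; rewrite -val_eqE !osh_val eqn_modDl !modn_small. Qed.

Lemma osh0 d (i : 'I_d) : osh i 0 = i.
Proof. by apply: val_inj; rewrite osh_val addn0 modn_small. Qed.

Lemma osh_osh d (i : 'I_d) a b : osh (osh i a) b = osh i (a + b).
Proof. by apply: val_inj; rewrite !osh_val modnDml addnA. Qed.

Section Facts.
End Facts.

Lemma oo12 d (i : 'I_d) : osh (osh i 1) 1 = osh i 2.
Proof. by rewrite osh_osh. Qed.
Lemma oo23 d (i : 'I_d) : osh (osh i 2) 1 = osh i 3.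
Proof. by rewrite osh_osh. Qed.

Lemma oshneq n (i : 'I_n.+4) a b : a < n.+4 -> b < n.+4 -> a != b -> (osh i a == osh i b) = false.
Proof. by move=> ha hb hab; rewrite -val_eqE !osh_val eqn_modDl !modn_small //; apply/negbTE. Qed.

Lemma tpermE' (T : finType) (a b z : T) :
  tperm a b z = if z == a then b else if z == b then a else z.
Proof. by case: tpermP => [->|->|/eqP/negbTE-> /eqP/negbTE->]; rewrite ?eqxx //; case: eqP. Qed.

Lemma xi_cons4 n (i x : 'I_n.+4) w :
  geval (xi i) (x :: w) = (tperm (osh i 1) (osh i 3) * tperm i (osh i 2))%g x :: w.
Proof.
have e01 : (i == osh i 1) = false by rewrite -{1}(@osh0 _ i) oshneq.
have e02 : (i == osh i 2) = false by rewrite -{1}(@osh0 _ i) oshneq.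
have e03 : (i == osh i 3) = false by rewrite -{1}(@osh0 _ i) oshneq.
have e10 : (osh i 1 == i) = false by rewrite -{2}(@osh0 _ i) oshneq.
have e20 : (osh i 2 == i) = false by rewrite -{2}(@osh0 _ i) oshneq.
have e30 : (osh i 3 == i) = false by rewrite -{2}(@osh0 _ i) oshneq.
have e12 : (osh i 1 == osh i 2) = false by rewrite oshneq.
have e13 : (osh i 1 == osh i 3) = false by rewrite oshneq.
have e21 : (osh i 2 == osh i 1) = false by rewrite oshneq.
have e23 : (osh i 2 == osh i 3) = false by rewrite oshneq.
have e31 : (osh i 3 == osh i 1) = false by rewrite oshneq.
have e32 : (osh i 3 == osh i 2) = false by rewrite oshneq.
rewrite /geval /xi /gcomm /gsq /= permM.
have [->|/negbTE n0] := eqVneq x i; first by do 16 (rewrite ?gen_act_cons ?gen_inv_cons ?oo12 ?oo23 ?osh3 ?eqxx ?e01 ?e02 ?e03 ?e10 ?e20 ?e30 ?e12 ?e13 ?e21 ?e23 ?e31 ?e32 ?tpermE' ?n0 ?n1 ?n2 ?n3 /=); by rewrite ?gen_actK ?gen_invK.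
have [->|/negbTE n1] := eqVneq x (osh i 1); first by do 16 (rewrite ?gen_act_cons ?gen_inv_cons ?oo12 ?oo23 ?osh3 ?eqxx ?e01 ?e02 ?e03 ?e10 ?e20 ?e30 ?e12 ?e13 ?e21 ?e23 ?e31 ?e32 ?tpermE' ?n0 ?n1 ?n2 ?n3 /=); by rewrite ?gen_actK ?gen_invK.
have [->|/negbTE n2] := eqVneq x (osh i 2); first by do 16 (rewrite ?gen_act_cons ?gen_inv_cons ?oo12 ?oo23 ?osh3 ?eqxx ?e01 ?e02 ?e03 ?e10 ?e20 ?e30 ?e12 ?e13 ?e21 ?e23 ?e31 ?e32 ?tpermE' ?n0 ?n1 ?n2 ?n3 /=); by rewrite ?gen_actK ?gen_invK.
have [->|/negbTE n3] := eqVneq x (osh i 3); first by do 16 (rewrite ?gen_act_cons ?gen_inv_cons ?oo12 ?oo23 ?osh3 ?eqxx ?e01 ?e02 ?e03 ?e10 ?e20 ?e30 ?e12 ?e13 ?e21 ?e23 ?e31 ?e32 ?tpermE' ?n0 ?n1 ?n2 ?n3 /=); by rewrite ?gen_actK ?gen_invK.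
do 16 (rewrite ?gen_act_cons ?gen_inv_cons ?oo12 ?oo23 ?osh3 ?eqxx ?e01 ?e02 ?e03 ?e10 ?e20 ?e30 ?e12 ?e13 ?e21 ?e23 ?e31 ?e32 ?tpermE' ?n0 ?n1 ?n2 ?n3 /=); by rewrite ?gen_actK ?gen_invK.
Qed.

Lemma oshneq3 (i : 'I_3) a b : a < 3 -> b < 3 -> a != b -> (osh i a == osh i b) = false.
Proof. by move=> ha hb hab; rewrite -val_eqE !osh_val eqn_modDl !modn_small //; apply/negbTE. Qed.

Lemma osh3 (i : 'I_3) : osh i 3 = i.
Proof. by apply: val_inj; rewrite osh_val modnDr modn_small. Qed.

Lemma xi_cons3 (i x : 'I_3) w :
  geval (xi i) (x :: w) = (tperm (osh i 1) (osh i 3) * tperm i (osh i 2))%g x :: w.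
Proof.
have e01 : (i == osh i 1) = false by rewrite -{1}(@osh0 _ i) oshneq3.
have e02 : (i == osh i 2) = false by rewrite -{1}(@osh0 _ i) oshneq3.
have e10 : (osh i 1 == i) = false by rewrite -{2}(@osh0 _ i) oshneq3.
have e20 : (osh i 2 == i) = false by rewrite -{2}(@osh0 _ i) oshneq3.
have e12 : (osh i 1 == osh i 2) = false by rewrite oshneq3.
have e21 : (osh i 2 == osh i 1) = false by rewrite oshneq3.
rewrite /geval /xi /gcomm /gsq /= permM osh3.
have [->|/negbTE n0] := eqVneq x i; first by do 16 (rewrite ?gen_act_cons ?gen_inv_cons ?oo12 ?oo23 ?osh3 ?eqxx ?e01 ?e02 ?e10 ?e20 ?e12 ?e21 ?tpermE' ?n0 ?n1 ?n2 /=); by rewrite ?gen_actK ?gen_invK.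
have [->|/negbTE n1] := eqVneq x (osh i 1); first by do 16 (rewrite ?gen_act_cons ?gen_inv_cons ?oo12 ?oo23 ?osh3 ?eqxx ?e01 ?e02 ?e10 ?e20 ?e12 ?e21 ?tpermE' ?n0 ?n1 ?n2 /=); by rewrite ?gen_actK ?gen_invK.
have [->|/negbTE n2] := eqVneq x (osh i 2); first by do 16 (rewrite ?gen_act_cons ?gen_inv_cons ?oo12 ?oo23 ?osh3 ?eqxx ?e01 ?e02 ?e10 ?e20 ?e12 ?e21 ?tpermE' ?n0 ?n1 ?n2 /=); by rewrite ?gen_actK ?gen_invK.
do 16 (rewrite ?gen_act_cons ?gen_inv_cons ?oo12 ?oo23 ?osh3 ?eqxx ?e01 ?e02 ?e10 ?e20 ?e12 ?e21 ?tpermE' ?n0 ?n1 ?n2 /=); by rewrite ?gen_actK ?gen_invK.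
Qed.

Lemma fpow_cons d (f : seq 'I_d -> seq 'I_d) (s : 'I_d -> 'I_d) :
  (forall x w, f (x :: w) = s x :: w) ->
  forall k x w, fpow f k (x :: w) = iter k s x :: w.
Proof. move=> hf; elim=> [|k IH] x w //; by rewrite /fpow iterS -/(fpow f k) IH hf. Qed.

Lemma order_crit d (f : seq 'I_d -> seq 'I_d) (s : 'I_d -> 'I_d) (i : 'I_d) k :
  (forall x w, f (x :: w) = s x :: w) -> f [::] = [::] -> 0 < k ->
  (forall x, iter k s x = x) -> (forall m, 0 < m < k -> iter m s i <> i) ->
  has_order f k.
Proof.
move=> hf hn hk hs hm; split=> //; split.
- case=> [|x w]; last by rewrite (@fpow_cons _ _ _ hf) hs.
  by rewrite /fpow; elim: k {hk hs hm} => //= k ->.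
- move=> m hm' hid; apply: (hm m hm'); have := hid [:: i].
  by rewrite (@fpow_cons _ _ _ hf) => -[].
Qed.

Lemma s4_inv n (i x : 'I_n.+4) :
  let s := (tperm (osh i 1) (osh i 3) * tperm i (osh i 2))%g in s (s x) = x.
Proof.
have e01 : (i == osh i 1) = false by rewrite -{1}(@osh0 _ i) oshneq.
have e02 : (i == osh i 2) = false by rewrite -{1}(@osh0 _ i) oshneq.
have e03 : (i == osh i 3) = false by rewrite -{1}(@osh0 _ i) oshneq.
have e10 : (osh i 1 == i) = false by rewrite -{2}(@osh0 _ i) oshneq.
have e20 : (osh i 2 == i) = false by rewrite -{2}(@osh0 _ i) oshneq.
have e30 : (osh i 3 == i) = false by rewrite -{2}(@osh0 _ i) oshneq.
have e12 : (osh i 1 == osh i 2) = false by rewrite oshneq.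
have e13 : (osh i 1 == osh i 3) = false by rewrite oshneq.
have e21 : (osh i 2 == osh i 1) = false by rewrite oshneq.
have e23 : (osh i 2 == osh i 3) = false by rewrite oshneq.
have e31 : (osh i 3 == osh i 1) = false by rewrite oshneq.
have e32 : (osh i 3 == osh i 2) = false by rewrite oshneq.
move=> s; rewrite /s.
have [->|/negbTE n0] := eqVneq x i; first by do 6 (rewrite ?permM ?tpermE' ?eqxx ?e01 ?e02 ?e03 ?e10 ?e20 ?e30 ?e12 ?e13 ?e21 ?e23 ?e31 ?e32 ?n0 ?n1 ?n2 ?n3 /=).
have [->|/negbTE n1] := eqVneq x (osh i 1); first by do 6 (rewrite ?permM ?tpermE' ?eqxx ?e01 ?e02 ?e03 ?e10 ?e20 ?e30 ?e12 ?e13 ?e21 ?e23 ?e31 ?e32 ?n0 ?n1 ?n2 ?n3 /=).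
have [->|/negbTE n2] := eqVneq x (osh i 2); first by do 6 (rewrite ?permM ?tpermE' ?eqxx ?e01 ?e02 ?e03 ?e10 ?e20 ?e30 ?e12 ?e13 ?e21 ?e23 ?e31 ?e32 ?n0 ?n1 ?n2 ?n3 /=).
have [->|/negbTE n3] := eqVneq x (osh i 3); first by do 6 (rewrite ?permM ?tpermE' ?eqxx ?e01 ?e02 ?e03 ?e10 ?e20 ?e30 ?e12 ?e13 ?e21 ?e23 ?e31 ?e32 ?n0 ?n1 ?n2 ?n3 /=).
by do 6 (rewrite ?permM ?tpermE' ?eqxx ?e01 ?e02 ?e03 ?e10 ?e20 ?e30 ?e12 ?e13 ?e21 ?e23 ?e31 ?e32 ?n0 ?n1 ?n2 ?n3 /=).
Qed.

Lemma s4_i n (i : 'I_n.+4) :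
  (tperm (osh i 1) (osh i 3) * tperm i (osh i 2))%g i = osh i 2.
Proof.
have e01 : (i == osh i 1) = false by rewrite -{1}(@osh0 _ i) oshneq.
have e02 : (i == osh i 2) = false by rewrite -{1}(@osh0 _ i) oshneq.
have e03 : (i == osh i 3) = false by rewrite -{1}(@osh0 _ i) oshneq.
have e10 : (osh i 1 == i) = false by rewrite -{2}(@osh0 _ i) oshneq.
have e20 : (osh i 2 == i) = false by rewrite -{2}(@osh0 _ i) oshneq.
have e30 : (osh i 3 == i) = false by rewrite -{2}(@osh0 _ i) oshneq.
have e12 : (osh i 1 == osh i 2) = false by rewrite oshneq.
have e13 : (osh i 1 == osh i 3) = false by rewrite oshneq.
have e21 : (osh i 2 == osh i 1) = false by rewrite oshneq.
have e23 : (osh i 2 == osh i 3) = false by rewrite oshneq.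
have e31 : (osh i 3 == osh i 1) = false by rewrite oshneq.
have e32 : (osh i 3 == osh i 2) = false by rewrite oshneq.
by do 6 (rewrite ?permM ?tpermE' ?eqxx ?e01 ?e02 ?e03 ?e10 ?e20 ?e30 ?e12 ?e13 ?e21 ?e23 ?e31 ?e32 ?n0 ?n1 ?n2 ?n3 /=).
Qed.

Lemma s3_cube (i x : 'I_3) :
  let s := (tperm (osh i 1) (osh i 3) * tperm i (osh i 2))%g in s (s (s x)) = x.
Proof.
have e01 : (i == osh i 1) = false by rewrite -{1}(@osh0 _ i) oshneq3.
have e02 : (i == osh i 2) = false by rewrite -{1}(@osh0 _ i) oshneq3.
have e10 : (osh i 1 == i) = false by rewrite -{2}(@osh0 _ i) oshneq3.
have e20 : (osh i 2 == i) = false by rewrite -{2}(@osh0 _ i) oshneq3.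
have e12 : (osh i 1 == osh i 2) = false by rewrite oshneq3.
have e21 : (osh i 2 == osh i 1) = false by rewrite oshneq3.
move=> s; rewrite /s osh3.
have [->|/negbTE n0] := eqVneq x i; first by do 8 (rewrite ?permM ?tpermE' ?eqxx ?e01 ?e02 ?e10 ?e20 ?e12 ?e21 ?n0 ?n1 ?n2 /=).
have [->|/negbTE n1] := eqVneq x (osh i 1); first by do 8 (rewrite ?permM ?tpermE' ?eqxx ?e01 ?e02 ?e10 ?e20 ?e12 ?e21 ?n0 ?n1 ?n2 /=).
have [->|/negbTE n2] := eqVneq x (osh i 2); first by do 8 (rewrite ?permM ?tpermE' ?eqxx ?e01 ?e02 ?e10 ?e20 ?e12 ?e21 ?n0 ?n1 ?n2 /=).
by do 8 (rewrite ?permM ?tpermE' ?eqxx ?e01 ?e02 ?e10 ?e20 ?e12 ?e21 ?n0 ?n1 ?n2 /=).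
Qed.

Lemma s3_i (i : 'I_3) :
  let s := (tperm (osh i 1) (osh i 3) * tperm i (osh i 2))%g in
  s i = osh i 1 /\ s (s i) = osh i 2.
Proof.
have e01 : (i == osh i 1) = false by rewrite -{1}(@osh0 _ i) oshneq3.
have e02 : (i == osh i 2) = false by rewrite -{1}(@osh0 _ i) oshneq3.
have e10 : (osh i 1 == i) = false by rewrite -{2}(@osh0 _ i) oshneq3.
have e20 : (osh i 2 == i) = false by rewrite -{2}(@osh0 _ i) oshneq3.
have e12 : (osh i 1 == osh i 2) = false by rewrite oshneq3.
have e21 : (osh i 2 == osh i 1) = false by rewrite oshneq3.
move=> s; rewrite /s osh3; split; by do 8 (rewrite ?permM ?tpermE' ?eqxx ?e01 ?e02 ?e10 ?e20 ?e12 ?e21 ?n0 ?n1 ?n2 /=).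
Qed.


Arguments osh : simpl never.
Arguments gen_act : simpl never.
Arguments gen_inv : simpl never.

Fixpoint bw (n k : nat) : gword n.+3 :=
  if k is k'.+1 then GMul (bw n k') (GGen (om n k')) else GOne n.+3.

Lemma bw_eval n k u : geval (bw n k) u = P n k u.
Proof. by elim: k u => [|k IH] u //; rewrite P_S -IH. Qed.

Lemma not_torsion n : ~ Gd_torsion n.+3.
Proof.
move=> H; have [m hm hid] := H (bw n n.+3).
apply: (proj1 (@no_torsion n m hm)) => u.
by rewrite -(eq_iter (@bw_eval n n.+3)); apply: hid.
Qed.

Theorem mainTheorem13 (d : nat) (hd : 3 <= d) (hodd : odd d) :
  ~ Gd_torsion d /\ ~ Gd_torsion_free d /\
  (forall i : 'I_d,
     ~ is_id (geval (xi i)) /\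
     (forall (x : 'I_d) (w : seq 'I_d),
        geval (xi i) (x :: w)
        = (tperm (osh i 1) (osh i 3) * tperm i (osh i 2))%g x :: w) /\
     has_order (geval (xi i)) (if d == 3 then 3 else 2)).
Proof.
case: d hd hodd => [|[|[|n]]] // hd hodd.
have xiP : forall i : 'I_n.+3,
     ~ is_id (geval (xi i)) /\
     (forall (x : 'I_n.+3) (w : seq 'I_n.+3),
        geval (xi i) (x :: w)
        = (tperm (osh i 1) (osh i 3) * tperm i (osh i 2))%g x :: w) /\
     has_order (geval (xi i)) (if n.+3 == 3 then 3 else 2).
  case: n {hd hodd} => [|n] i /=.
  - have hc := xi_cons3 i.
    have [h1 h2] := s3_i i.
    have e10 : osh i 1 <> i by move/eqP; rewrite -{2}(@osh0 _ i) oshneq3.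
    have e20 : osh i 2 <> i by move/eqP; rewrite -{2}(@osh0 _ i) oshneq3.
    split; [|split] => //.
    + move=> hid; have := hid [:: i]; rewrite hc h1; case; exact: e10.
    + apply: (@order_crit _ _ _ i _ hc) => //.
      * by move=> x; exact (s3_cube i x).
      * by case=> [|[|[|m]]] //= _; [rewrite h1 | rewrite h2].
  - have hc := @xi_cons4 n i.
    have h1 := @s4_i n i.
    have e20 : osh i 2 <> i by move/eqP; rewrite -{2}(@osh0 _ i) oshneq.
    split; [|split] => //.
    + move=> hid; have := hid [:: i]; rewrite hc h1; case; exact: e20.
    + apply: (@order_crit _ _ _ i _ hc) => //.
      * by move=> x; exact (@s4_inv n i x).
      * by case=> [|[|m]] //= _; rewrite ?h1.
split; first exact: not_torsion.
split => //.
move=> H; have [h1 [_ h3]] := xiP ord0.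
have [hk [hid _]] := h3.
exact: (H (xi ord0) h1 _ hk hid).
Qed.
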